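(* Let $\beta\in(\frac{1+\sqrt5}{2},2)$ and let $(\eta_i)$ be the quasi-greedy expansion of $1$. If there exists $k_0\ge1$ such that $\overline{\eta_{k_0+1}\eta_{k_0+2}\cdots}>\eta_1\eta_2\cdots$ in the lexicographic order, then some point of the quasi-greedy orbit of $1$ lies in the open interval $(\beta^{-1},\beta^{-1}(\beta-1)^{-1})$.
   Context: The quasi-greedy expansion $(\eta_i)$ of $1$ equals the greedy $\beta$-expansion of $1$ (generated by $G(x)=\beta x\bmod1$ on $[0,1)$, $G(x)=\beta x-1$ on $[1,(\beta-1)^{-1}]$, digits $\lfloor \beta G^{n-1}(1)\rfloor$) if that is infinite; if the greedy expansion is $a_1\cdots a_n0^\infty$ with $a_n=1$, then $(\eta_i)=(a_1\cdots a_{n-1}(a_n-1))^\infty$. The quasi-greedy orbit of $1$ is $Q^i(1)=\sum_{j\ge1}\eta_{i+j}\beta^{-j}$, $i\ge1$. The bar denotes digitwise reflection $a\mapsto1-a$. *)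

(* Defs.v *)
From Stdlib Require Import Reals Lra Lia Arith.
Open Scope R_scope.

(* floor x : Int_part x = up x - 1 satisfies  IZR (Int_part x) <= x < IZR (Int_part x) + 1 *)

Definition greedy_map (beta x : R) : R :=
  if Rlt_dec x 1 then beta * x - IZR (Int_part (beta * x)) else beta * x - 1.

Fixpoint greedy_iter (beta : R) (n : nat) (x : R) : R :=
  match n with
  | O => x
  | S m => greedy_map beta (greedy_iter beta m x)
  end.

Definition greedy_digit (beta : R) (n : nat) : nat :=
  Z.to_nat (Int_part (beta * greedy_iter beta (n - 1) 1)).

(* (eta_i)_{i>=1} is the quasi-greedy expansion of 1 in base beta
   (only the values at indices i >= 1 are meaningful). *)
Definition is_quasi_greedy (beta : R) (eta : nat -> nat) : Prop :=
  (
    (forall m : nat, exists k : nat, (k > m)%nat /\ greedy_digit beta k <> 0%nat) /\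
    (forall i : nat, (1 <= i)%nat -> eta i = greedy_digit beta i) )
  \/
  ( (* greedy expansion a_1 ... a_n 0^oo with a_n <> 0: eta = (a_1 ... a_{n-1} (a_n - 1))^oo *)
    exists n : nat, (1 <= n)%nat /\ greedy_digit beta n <> 0%nat /\
      (forall m : nat, (m > n)%nat -> greedy_digit beta m = 0%nat) /\
      (forall i : nat, (1 <= i)%nat ->
         let r := (((i - 1) mod n) + 1)%nat in
         eta i = if Nat.eqb r n then (greedy_digit beta n - 1)%nat
                 else greedy_digit beta r) ).

Definition lex_gt (u v : nat -> nat) : Prop :=
  exists n : nat, (1 <= n)%nat /\
    (forall j : nat, (1 <= j < n)%nat -> u j = v j) /\ (u n > v n)%nat.

Definition reflected_tail (eta : nat -> nat) (k : nat) : nat -> nat :=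
  fun j => (1 - eta (k + j))%nat.

(* q = Q^i(1) = sum_{j>=1} eta_{i+j} beta^{-j} *)
Definition is_quasi_greedy_orbit_point (beta : R) (eta : nat -> nat) (i : nat) (q : R) : Prop :=
  infinite_sum (fun j : nat => INR (eta (i + S j)%nat) / beta ^ (S j)) q.

(* Main.v *)
Require Import Defs.
From Stdlib Require Import Reals Lra Lia Arith ZArith Classical.
Open Scope R_scope.

Lemma IntP_bounds r : IZR (Int_part r) <= r /\ r < IZR (Int_part r) + 1.
Proof. destruct (base_Int_part r). lra. Qed.

Lemma IntP_01 r : 0 <= r < 2 -> Int_part r = 0%Z \/ Int_part r = 1%Z.
Proof.
  intros H. destruct (IntP_bounds r) as [H1 H2].
  assert (A : IZR (Int_part r) < IZR 2) by lra.
  assert (B : IZR (-1) < IZR (Int_part r)) by lra.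
  apply lt_IZR in A. apply lt_IZR in B. lia.
Qed.

Lemma gmap_facts b x : 1 < b < 2 -> 0 <= x <= 1 ->
  (Int_part (b*x) = 0%Z \/ Int_part (b*x) = 1%Z) /\
  greedy_map b x = b*x - IZR (Int_part (b*x)) /\ 0 <= greedy_map b x < 1.
Proof.
  intros Hb Hx.
  assert (H01 : Int_part (b*x) = 0%Z \/ Int_part (b*x) = 1%Z) by (apply IntP_01; nra).
  unfold greedy_map.
  destruct (Rlt_dec x 1).
  - split; [exact H01|]. split; [reflexivity|]. destruct (IntP_bounds (b*x)). lra.
  - assert (x = 1) by lra. subst x.
    assert (E1 : Int_part (b*1) = 1%Z).
    { destruct H01 as [E|E]; auto. destruct (IntP_bounds (b*1)). rewrite E in *. lra. }
    rewrite E1. split; auto. split. ring. lra.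
Qed.

Definition gi b k := greedy_iter b k 1.

Lemma g_bound b k : 1 < b < 2 -> 0 <= gi b k <= 1.
Proof.
  intros Hb. induction k. unfold gi; simpl; lra.
  unfold gi in *; simpl. destruct (gmap_facts b _ Hb IHk) as (_&_&H). lra.
Qed.

Lemma g_facts b k : 1 < b < 2 ->
  (greedy_digit b (S k) = 0%nat \/ greedy_digit b (S k) = 1%nat) /\
  gi b (S k) = b * gi b k - INR (greedy_digit b (S k)) /\ 0 <= gi b (S k) < 1.
Proof.
  intros Hb. pose proof (g_bound b k Hb) as Hk.
  destruct (gmap_facts b _ Hb Hk) as (H01 & E & H).
  unfold greedy_digit. replace (S k - 1)%nat with k by lia.
  unfold gi in *. simpl. rewrite E.
  destruct H01 as [Z|Z]; rewrite Z in *; simpl; split; auto; lra.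
Qed.

Lemma g_zero b k : 1 < b < 2 -> gi b k = 0 -> forall m, gi b (k+m) = 0 /\ greedy_digit b (S (k+m)) = 0%nat.
Proof.
  intros Hb H0 m. induction m.
  - rewrite Nat.add_0_r. split; auto.
    destruct (g_facts b k Hb) as ([D|D] & E & B); auto.
    rewrite D, H0 in E. simpl in E. lra.
  - destruct IHm as [H1 H2]. replace (k + S m)%nat with (S (k+m)) by lia.
    destruct (g_facts b (k+m) Hb) as (_ & E & B).
    rewrite H2, H1 in E. simpl in E.
    assert (G : gi b (S (k+m)) = 0) by lra. split; auto.
    destruct (g_facts b (S (k+m)) Hb) as ([D'|D'] & E' & B'); auto.
    rewrite D', G in E'. simpl in E'. lra.
Qed.

Lemma small_pow b eps : 1 < b -> 0 < eps -> exists N, forall n, (n >= N)%nat -> / b ^ n < eps.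
Proof.
  intros Hb He. destruct (pow_lt_1_zero (/ b)) with (y := eps) as [N HN]; auto.
  rewrite Rabs_right. rewrite <- Rinv_1; apply Rinv_1_lt_contravar; lra. left; apply Rinv_0_lt_compat; lra.
  exists N. intros n Hn. specialize (HN n Hn). rewrite <- pow_inv.
  rewrite Rabs_right in HN; auto. left. apply pow_lt. apply Rinv_0_lt_compat; lra.
Qed.

Lemma series_lemma b eta g i : 1 < b -> (forall k, 0 <= g k <= 1) ->
  (forall k, g (S k) = b * g k - INR (eta (S k))) ->
  infinite_sum (fun j => INR (eta (i + S j)%nat) / b ^ (S j)) (g i).
Proof.
  intros Hb Hg Hr.
  assert (P : forall m, sum_f_R0 (fun j => INR (eta (i + S j)%nat) / b ^ (S j)) m
                = g i - g (i + S m)%nat / b ^ (S m)).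
  { induction m.
    - simpl. replace (i + 1)%nat with (S i) by lia. rewrite Hr. field. lra.
    - rewrite tech5. rewrite IHm. cbv beta. replace (i + S (S m))%nat with (S (i + S m)) by lia.
      rewrite Hr. simpl. field. split; [apply pow_nonzero|]; lra. }
  intros eps He. destruct (small_pow b eps Hb He) as [N HN].
  exists N. intros n Hn. unfold Rdist. rewrite P.
  specialize (HN (S n) ltac:(lia)).
  assert (0 < b ^ S n) by (apply pow_lt; lra).
  destruct (Hg (i + S n)%nat).
  replace (g i - g (i + S n)%nat / b ^ S n - g i) with (- (g (i + S n)%nat * / b ^ S n)) by (field; lra).
  rewrite Rabs_Ropp. rewrite Rabs_right.
  2: { apply Rle_ge, Rmult_le_pos; auto. left; apply Rinv_0_lt_compat; auto. }
  apply Rle_lt_trans with (/ b ^ S n); auto.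
  rewrite <- (Rmult_1_l (/ b ^ S n)) at 2. apply Rmult_le_compat_r; auto.
  left; apply Rinv_0_lt_compat; auto.
Qed.

Lemma bounded_zero b x : 1 < b -> 0 <= x -> (forall m, b ^ m * x <= 1) -> x = 0.
Proof.
  intros Hb Hx H. destruct Hx as [Hx|]; auto.
  destruct (small_pow b x Hb Hx) as [N HN]. specialize (HN N (le_n _)). specialize (H N).
  assert (0 < b ^ N) by (apply pow_lt; lra).
  assert (1 < b ^ N * x).
  { apply Rmult_lt_compat_l with (r := b ^ N) in HN; auto. rewrite Rinv_r in HN; lra. }
  lra.
Qed.

Lemma core b eta g :
  (1 + sqrt 5) / 2 < b -> b < 2 -> g 0%nat = 1 -> (forall i, 0 < g i <= 1) ->
  (forall i, g (S i) = b * g i - INR (eta (S i))) ->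
  (exists k0 : nat, (1 <= k0)%nat /\ lex_gt (reflected_tail eta k0) eta) ->
  exists i, (1 <= i)%nat /\ / b < g i < / b * / (b - 1).
Proof.
  intros H0 Hb2 Hg0 Hg Hr Hk.
  assert (Hbb : b * b - b > 1).
  { pose (s := sqrt 5). assert (s * s = 5) by (apply sqrt_sqrt; lra).
    assert (0 <= s) by apply sqrt_pos. fold s in H0. nra. }
  assert (Hb1 : b > 1).
  { assert (0 <= sqrt 5) by apply sqrt_pos. nra. }
  assert (D : forall i, eta (S i) = 0%nat \/ eta (S i) = 1%nat).
  { intros i. assert (INR (eta (S i)) < INR 2).
    { pose proof (Hg i). pose proof (Hg (S i)). rewrite Hr in H1.
      simpl. nra. }
    apply INR_lt in H. lia. }
  apply NNPP; intro Hno.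
  assert (Av : forall i, b * g i <= 1 \/ 1 <= b * (b - 1) * g i).
  { intros [|i]. right; rewrite Hg0; nra.
    destruct (Rle_or_lt (b * g (S i)) 1); auto.
    destruct (Rle_or_lt 1 (b * (b - 1) * g (S i))); auto.
    exfalso. apply Hno. exists (S i). split. lia. split.
    - apply Rmult_lt_reg_l with b; [lra|]. rewrite Rinv_r; lra.
    - apply Rmult_lt_reg_l with (b * (b - 1)); [nra|].
      replace (b * (b - 1) * (/ b * / (b - 1))) with 1 by (field; lra). lra. }
  assert (F1 : forall t, eta (S t) = 1%nat -> (b - 1) * g (S t) >= 2 - b).
  { intros t E. pose proof (Hr t) as R. rewrite E in R. simpl in R.
    pose proof (Hg (S t)). pose proof (Hg t). destruct (Av t); rewrite R in *; nra. }
  assert (S2 : forall m, (b - 1) * g (S m) >= 2 - b).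
  { induction m.
    - destruct (D 0%nat) as [E|E]; [|apply F1; auto].
      pose proof (Hr 0%nat) as R. rewrite E, Hg0 in R. simpl in R. pose proof (Hg 1%nat). lra.
    - destruct (D (S m)) as [E|E]; [|apply F1; auto].
      pose proof (Hr (S m)) as R. rewrite E in R. simpl in R. rewrite R. nra. }
  destruct Hk as [k0 [Hk [n [Hn [Heq Hgt]]]]]. unfold reflected_tail in *.
  destruct n as [|n']; [lia|].
  assert (Z : eta (S n') = 0%nat /\ eta (k0 + S n')%nat = 0%nat) by lia.
  assert (C : forall j, (j <= n')%nat -> (b - 1) * (g (k0 + j)%nat + g j) >= 1).
  { induction j; intros Hj.
    - rewrite Nat.add_0_r, Hg0. destruct k0 as [|k']; [lia|]. pose proof (S2 k'). lra.
    - specialize (IHj ltac:(lia)). specialize (Heq (S j) ltac:(lia)).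
      replace (k0 + S j)%nat with (S (k0 + j)) in * by lia.
      rewrite !Hr. destruct (D j) as [E1|E1]; destruct (D (k0 + j)%nat) as [E2|E2];
        rewrite E1, E2 in *; try lia; simpl; nra. }
  specialize (C n' (le_n _)). destruct Z as [Z1 Z2].
  replace (k0 + S n')%nat with (S (k0 + n')) in Z2 by lia.
  pose proof (Hr n') as R1. pose proof (Hr (k0 + n')%nat) as R2.
  rewrite Z1 in R1. rewrite Z2 in R2. simpl in R1, R2.
  pose proof (Hg (S n')). pose proof (Hg (S (k0 + n'))). nra.
Qed.

Lemma exists_g b eta : 1 < b < 2 -> is_quasi_greedy b eta ->
  exists g : nat -> R, g 0%nat = 1 /\ (forall i, 0 < g i <= 1) /\
    (forall i, g (S i) = b * g i - INR (eta (S i))).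
Proof.
  intros Hb [[Hinf He] | [n [Hn [Han [Hz He]]]]].
  - exists (gi b). split; [reflexivity|]. split.
    + intros i. split; [|apply g_bound; auto].
      destruct (g_bound b i Hb) as [[H|H] _]; auto. exfalso.
      destruct (Hinf i) as [k [Hk Hd]].
      destruct (g_zero b i Hb (eq_sym H) (k - i - 1)) as [_ Z].
      replace (S (i + (k - i - 1))) with k in Z by lia. auto.
    + intros i. rewrite He by lia. apply g_facts; auto.
  - assert (Gn : gi b n = 0).
    { apply (bounded_zero b); [lra| apply g_bound; auto|].
      assert (forall m, gi b (n + m) = b ^ m * gi b n).
      { induction m. rewrite Nat.add_0_r; simpl; ring.
        replace (n + S m)%nat with (S (n + m)) by lia.
        destruct (g_facts b (n + m) Hb) as (_ & E & _).
        rewrite E, Hz by lia. rewrite IHm. simpl. ring. }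
      intros m. rewrite <- H. apply g_bound; auto. }
    assert (Pos : forall r, (r < n)%nat -> 0 < gi b r).
    { intros r Hr. destruct (g_bound b r Hb) as [[H|H] _]; auto. exfalso.
      destruct (g_zero b r Hb (eq_sym H) (n - r - 1)) as [_ Z].
      replace (S (r + (n - r - 1))) with n in Z by lia. auto. }
    assert (Hn0 : n <> 0%nat) by lia.
    exists (fun i => gi b (i mod n)). split; [|split].
    + rewrite Nat.Div0.mod_0_l; auto.
    + intros i. split; [apply Pos, Nat.mod_upper_bound; auto | apply g_bound; auto].
    + intros i. cbv beta. rewrite He by lia. cbv zeta.
      replace (S i - 1)%nat with i by lia.
      pose proof (Nat.div_mod_eq i n) as Di. pose proof (Nat.mod_upper_bound i n Hn0) as Ub.
      set (r := (i mod n)%nat) in *. set (q := (i / n)%nat) in *. clearbody q r.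
      destruct (Nat.eqb_spec (r + 1) n) as [E|E].
      * assert (M : (S i mod n = 0)%nat).
        { symmetry. apply (Nat.mod_unique _ _ (q + 1)); [lia|]. rewrite Nat.mul_add_distr_l. clear - Di E. change Nat.add with Init.Nat.add in *. change Nat.mul with Init.Nat.mul in *. lia. }
        rewrite M.
        destruct (g_facts b r Hb) as (_ & E2 & _).
        replace (S r) with n in E2 by lia. rewrite Gn in E2.
        assert (Hd : (1 <= greedy_digit b n)%nat) by lia. rewrite minus_INR by exact Hd. unfold gi at 1. simpl. lra.
      * assert (M : (S i mod n = r + 1)%nat).
        { symmetry. apply (Nat.mod_unique _ _ q); lia. }
        rewrite M. replace (r + 1)%nat with (S r) by lia.
        apply g_facts; auto.
Qed.

Theorem lemma3p10 (beta : R) (eta : nat -> nat) :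
  (1 + sqrt 5) / 2 < beta -> beta < 2 ->
  is_quasi_greedy beta eta ->
  (exists k0 : nat, (1 <= k0)%nat /\ lex_gt (reflected_tail eta k0) eta) ->
  exists (i : nat) (q : R), (1 <= i)%nat /\ is_quasi_greedy_orbit_point beta eta i q /\
    / beta < q < / beta * / (beta - 1).
Proof.
  intros H1 H2 Hq Hk.
  assert (Hb1 : beta > 1).
  { assert (0 <= sqrt 5) by apply sqrt_pos.
    assert (sqrt 5 * sqrt 5 = 5) by (apply sqrt_sqrt; lra). nra. }
  destruct (exists_g beta eta ltac:(lra) Hq) as [g [G0 [Gb Gr]]].
  destruct (core beta eta g H1 H2 G0 Gb Gr Hk) as [i [Hi Hin]].
  exists i, (g i). split; auto. split; auto.
  apply series_lemma; auto. intros k; destruct (Gb k); lra.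
Qed.
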